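(* Let $d\ge1$, $n\ge3$, $u\in\mathbb{C}\setminus\{0\}$. In $\mathrm{Y}_{d,n}(u)$: (1) $g_1c_{1,2}=[1+(u-1)e_1]c_{1,2}$; (2) $g_2c_{1,2}=[1+(u-1)e_2]c_{1,2}$; (3) $g_1g_2c_{1,2}=[1+(u-1)e_1+(u-1)e_{1,3}+(u-1)^2e_1e_2]c_{1,2}$; (4) $g_2g_1c_{1,2}=[1+(u-1)e_2+(u-1)e_{1,3}+(u-1)^2e_1e_2]c_{1,2}$; (5) $g_1g_2g_1c_{1,2}=[1+(u-1)(e_1+e_2+e_{1,3})+(u-1)^2(u+2)e_1e_2]c_{1,2}$.
   Context: The Yokonuma–Hecke algebra $\mathrm{Y}_{d,n}(u)$ is the unital associative $\mathbb{C}$-algebra with generators $g_1,\ldots,g_{n-1},t_1,\ldots,t_n$ and relations: $g_ig_j=g_jg_i$ for $|i-j|>1$; $g_{i+1}g_ig_{i+1}=g_ig_{i+1}g_i$; $t_it_j=t_jt_i$; $t_i^d=1$; $g_it_i=t_{i+1}g_i$; $g_it_{i+1}=t_ig_i$; $g_it_j=t_jg_i$ for $j\ne i,i+1$; $g_i^2=1+(u-1)e_i+(u-1)e_ig_i$, where $e_i=\frac1d\sum_{s=0}^{d-1}t_i^st_{i+1}^{d-s}$. Also $e_{i,j}=\frac1d\sum_{s=0}^{d-1}t_i^st_j^{d-s}$. For $w\in S_n$ with reduced expression $s_{i_1}\cdots s_{i_k}$ put $g_w=g_{i_1}\cdots g_{i_k}$; $g_{1,2}=\sum_{w\in S_3}g_w$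 and $c_{1,2}=\sum_{a,b,c=0}^{d-1}t_1^at_2^bt_3^c\,g_{1,2}$. *)

(* Defs.v *)
From HB Require Import structures.
From mathcomp Require Import all_boot all_order all_algebra.
From mathcomp Require Import reals.
From mathcomp Require Import complex.
Set Implicit Arguments. Unset Strict Implicit. Unset Printing Implicit Defensive.
Import Order.TTheory GRing.Theory Num.Theory.
Local Open Scope ring_scope.
Local Open Scope nat_scope.
Local Open Scope ring_scope.

Definition CC (R : realType) : numClosedFieldType := R[i].

Section YH.
Variables (K : fieldType) (A : algType K).

Definition eij (d : nat) (t : nat -> A) (i j : nat) : A :=
  (d%:R : K)^-1 *: \sum_(s < d) (t i ^+ s * t j ^+ (d - s)).

Definition YH_relations (d n : nat) (u : K) (g t : nat -> A) : Prop :=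
  (forall i j, (1 <= i <= n.-1)%N -> (1 <= j <= n.-1)%N ->
         (i + 1 < j \/ j + 1 < i)%N -> g i * g j = g j * g i) /\
      (forall i, (1 <= i)%N -> (i.+1 <= n.-1)%N ->
         g i.+1 * g i * g i.+1 = g i * g i.+1 * g i) /\
      (forall i j, (1 <= i <= n)%N -> (1 <= j <= n)%N -> t i * t j = t j * t i) /\
      (forall i, (1 <= i <= n)%N -> t i ^+ d = 1) /\
      (forall i, (1 <= i <= n.-1)%N -> g i * t i = t i.+1 * g i) /\
      (forall i, (1 <= i <= n.-1)%N -> g i * t i.+1 = t i * g i) /\
      (forall i j, (1 <= i <= n.-1)%N -> (1 <= j <= n)%N -> (j != i)%N -> (j != i.+1)%N ->
         g i * t j = t j * g i) /\
      (forall i, (1 <= i <= n.-1)%N ->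
         g i ^+ 2 = 1 + (u - 1) *: eij d t i i.+1
                      + (u - 1) *: (eij d t i i.+1 * g i)).

(* g_{1,2} = sum_{w in S_3} g_w, using reduced words 1, s1, s2, s1s2, s2s1, s1s2s1 *)
Definition g12 (g : nat -> A) : A :=
  1 + g 1%N + g 2%N + g 1%N * g 2%N + g 2%N * g 1%N + g 1%N * g 2%N * g 1%N.

Definition c12 (d : nat) (g t : nat -> A) : A :=
  \sum_(a < d) \sum_(b < d) \sum_(c < d)
     (t 1%N ^+ a * t 2%N ^+ b * t 3%N ^+ c * g12 g).
End YH.

(* Main.v *)
Require Import Defs.
From HB Require Import structures.
From mathcomp Require Import all_boot all_order all_algebra.
From mathcomp Require Import reals complex.
From mathcomp Require Import zify ring.
Import GRing.Theory Num.Theory.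
Local Open Scope ring_scope.
Set Implicit Arguments. Unset Strict Implicit.

Definition Pw (K : fieldType) (A : algType K) (d : nat) (w : A) : A :=
  (d%:R : K)^-1 *: \sum_(s < d) w ^+ s.

Lemma comm_sum (K : fieldType) (A : algType K) (x : A) (I : Type) (r : seq I)
  (P : pred I) (F : I -> A) :
  (forall i, P i -> GRing.comm x (F i)) -> GRing.comm x (\sum_(i <- r | P i) F i).
Proof.
move=> H; rewrite /GRing.comm mulr_sumr mulr_suml.
by apply: eq_bigr => i Pi; rewrite H.
Qed.

Lemma comm_scale (K : fieldType) (A : algType K) (x y : A) (k : K) :
  GRing.comm x y -> GRing.comm x (k *: y).
Proof. by move=> H; rewrite /GRing.comm -scalerAl -scalerAr H. Qed.

Lemma comm_P (K : fieldType) (A : algType K) d (x w : A) :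
  GRing.comm x w -> GRing.comm x (Pw d w).
Proof. by move=> H; apply: comm_scale; apply: comm_sum => i _; apply: commrX. Qed.

Lemma P_absl (K : fieldType) (A : algType K) d (w : A) :
  (0 < d)%N -> w ^+ d = 1 -> w * Pw d w = Pw d w.
Proof.
case: d => [//|d] _ Hw; rewrite /Pw -scalerAr; congr (_ *: _).
rewrite mulr_sumr.
under eq_bigr do rewrite -exprS.
by rewrite big_ord_recr big_ord_recl /= Hw expr0 addrC.
Qed.

Lemma P_absr (K : fieldType) (A : algType K) d (w : A) :
  (0 < d)%N -> w ^+ d = 1 -> Pw d w * w = Pw d w.
Proof.
move=> d0 Hw; have <- : w * Pw d w = Pw d w * w.
  by apply: comm_P; apply: commr_refl.
exact: P_absl.
Qed.

Lemma P_absX (K : fieldType) (A : algType K) d (w : A) k :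
  (0 < d)%N -> w ^+ d = 1 -> Pw d w * w ^+ k = Pw d w.
Proof.
move=> d0 Hw; elim: k => [|k IH]; first by rewrite expr0 mulr1.
by rewrite exprSr mulrA IH P_absr.
Qed.

Lemma P_idem (K : fieldType) (A : algType K) d (w : A) :
  (0 < d)%N -> (d%:R : K) != 0 -> w ^+ d = 1 -> Pw d w * Pw d w = Pw d w.
Proof.
move=> d0 dn0 Hw; rewrite {2}/Pw -scalerAr mulr_sumr.
under eq_bigr do rewrite P_absX //.
rewrite sumr_const card_ord -scaler_nat scalerA mulVf //.
by rewrite scale1r.
Qed.

Lemma P_mix (K : fieldType) (A : algType K) d (a b : A) :
  (0 < d)%N -> a ^+ d = 1 -> GRing.comm a b ->
  Pw d a * Pw d (a * b) = Pw d a * Pw d b.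
Proof.
move=> d0 Ha Hab; rewrite /Pw -!scalerAr; congr (_ *: _).
rewrite !mulr_sumr; apply: eq_bigr => s _.
by rewrite exprMn_comm // mulrA -/(Pw d a) P_absX.
Qed.

Lemma P_comm (K : fieldType) (A : algType K) d (a b : A) :
  GRing.comm a b -> Pw d a * Pw d b = Pw d b * Pw d a.
Proof.
move=> H; apply: comm_P; apply: commr_sym; apply: comm_P; exact: commr_sym.
Qed.

Lemma eij_P (K : fieldType) (A : algType K) d (t : nat -> A) i j :
  (0 < d)%N -> GRing.comm (t i) (t j) -> t j ^+ d = 1 ->
  eij d t i j = Pw d (t i * t j ^+ d.-1).
Proof.
move=> d0 Hc Hd; rewrite /eij /Pw; congr (_ *: _); apply: eq_bigr => s _.
rewrite exprMn_comm; last exact: commrX.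
rewrite -exprM; congr (_ * _).
case: s => [[|s] Hs] /=; first by rewrite subn0 Hd muln0.

have -> : (d.-1 * s.+1 = (d - s.+1) + d * s)%N.
  rewrite mulnS; lia.
by rewrite exprD exprM Hd expr1n mulr1.
Qed.

Lemma gX (K : fieldType) (A : algType K) (g x y : A) n :
  g * x = y * g -> g * x ^+ n = y ^+ n * g.
Proof.
move=> H; elim: n => [|n IH]; first by rewrite !expr0 mulr1 mul1r.
by rewrite !exprS mulrA H -mulrA IH mulrA.
Qed.

Lemma g_eij (K : fieldType) (A : algType K) d (t : nat -> A) (g : A) i j i' j' :
  g * t i = t i' * g -> g * t j = t j' * g ->
  g * eij d t i j = eij d t i' j' * g.
Proof.
move=> Hi Hj; rewrite /eij -scalerAl -scalerAr mulr_sumr mulr_suml.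
congr (_ *: _); apply: eq_bigr => s _.
by rewrite mulrA (gX _ Hi) -mulrA (gX _ Hj) mulrA.
Qed.

Lemma sq_lemma (K : fieldType) (A : algType K) (g e : A) (al : K) :
  g ^+ 2 = 1 + al *: e + al *: (e * g) ->
  g * (1 + g) = (1 + al *: e) * (1 + g).
Proof.
move=> H; rewrite mulrDr mulr1 -expr2 H mulrDl mul1r mulrDr mulr1 -scalerAl.
by rewrite !addrA [g + 1]addrC.
Qed.

Lemma stepT (K : fieldType) (A : algType K) (g T G X : A) :
  g * T = T * g -> g * G = X * G -> GRing.comm T X -> g * (T * G) = X * (T * G).
Proof. by move=> h1 h2 h3; rewrite mulrA h1 -mulrA h2 mulrA h3 -mulrA. Qed.

Lemma ac1 (V : zmodType) (a b c d e f : V) : a+b+c+d+e+f = a+c+e+(b+d+f).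
Proof. rewrite -!addrA; congr (_ + _); rewrite (addrCA b); congr (_ + _).
by rewrite (addrCA d) (addrCA b). Qed.
Lemma ac2 (V : zmodType) (a b c d e f : V) : a+b+c+d+e+f = a+b+d+(c+e+f).
Proof. rewrite -!addrA; congr (_ + (_ + _)). by rewrite (addrCA c). Qed.

Lemma push (K : fieldType) (A : algType K) (g y z c : A) (k : K) :
  g * y = z * g -> g * ((1 + k *: y) * c) = (1 + k *: z) * (g * c).
Proof.
move=> H; rewrite !mulrA; congr (_ * _).
by rewrite mulrDr mulrDl mulr1 mul1r -scalerAr -scalerAl H.
Qed.

Lemma fin5 (K : fieldType) (V : lmodType K) (o p q r x : V) (a1 a2 a3 a4 k : K) :
  k = a1 + a2 + a3 + a4 ->
  o + p + q + a1 *: x + (r + a2 *: x + a3 *: x + a4 *: x) = o + (p + r + q) + k *: x.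
Proof.
move=> ->; rewrite !scalerDl -!addrA; congr (_ + (_ + _)).
by rewrite (addrCA (a1 *: x) r) (addrCA q r).
Qed.

Lemma gM (K : fieldType) (A : algType K) (g x x' y y' : A) :
  g * x = x' * g -> g * y = y' * g -> g * (x * y) = (x' * y') * g.
Proof. by move=> hx hy; rewrite mulrA hx -mulrA hy mulrA. Qed.

Theorem lemma6 (R : realType) (d n : nat) (u : CC R)
  (A : algType (CC R)) (g t : nat -> A) :
  (1 <= d)%N -> (3 <= n)%N -> u != 0 ->
  YH_relations d n u g t ->
  let e := eij d t in
  let c := c12 d g t in
  [/\ g 1%N * c = (1 + (u - 1) *: e 1%N 2%N) * c,
      g 2%N * c = (1 + (u - 1) *: e 2%N 3%N) * c,
      g 1%N * g 2%N * c =
        (1 + (u - 1) *: e 1%N 2%N + (u - 1) *: e 1%N 3%N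
           + (u - 1) ^+ 2 *: (e 1%N 2%N * e 2%N 3%N)) * c,
      g 2%N * g 1%N * c =
        (1 + (u - 1) *: e 2%N 3%N + (u - 1) *: e 1%N 3%N
           + (u - 1) ^+ 2 *: (e 1%N 2%N * e 2%N 3%N)) * c &
      g 1%N * g 2%N * g 1%N * c =
        (1 + (u - 1) *: (e 1%N 2%N + e 2%N 3%N + e 1%N 3%N)
           + ((u - 1) ^+ 2 * (u + 2)) *: (e 1%N 2%N * e 2%N 3%N)) * c].
Proof.
move=> d0 n3 u0 [Hc [Hb [Htt [Htd [Hg1 [Hg2 [Hg3 Hsq]]]]]]] e c.
have tc : forall i j, (1 <= i <= 3)%N -> (1 <= j <= 3)%N -> GRing.comm (t i) (t j).
  by move=> i j hi hj; apply: Htt; lia.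
have td : forall k, (1 <= k <= 3)%N -> t k ^+ d = 1 by move=> k hk; apply: Htd; lia.
have g1t1 : g 1%N * t 1%N = t 2%N * g 1%N by apply: Hg1; lia.
have g1t2 : g 1%N * t 2%N = t 1%N * g 1%N by apply: Hg2; lia.
have g1t3 : g 1%N * t 3%N = t 3%N * g 1%N by apply: Hg3; lia.
have g2t2 : g 2%N * t 2%N = t 3%N * g 2%N by apply: Hg1; lia.
have g2t3 : g 2%N * t 3%N = t 2%N * g 2%N by apply: Hg2; lia.
have g2t1 : g 2%N * t 1%N = t 1%N * g 2%N by apply: Hg3; lia.
have braid : g 2%N * g 1%N * g 2%N = g 1%N * g 2%N * g 1%N by apply: Hb; lia.
have sq1 := Hsq 1%N ltac:(lia).
have sq2 := Hsq 2%N ltac:(lia).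
have dn0 : (d%:R : CC R) != 0 by rewrite pnatr_eq0 -lt0n.
pose a := t 1%N * t 2%N ^+ d.-1.
pose b := t 2%N * t 3%N ^+ d.-1.
have tca : forall k, (1 <= k <= 3)%N -> GRing.comm (t k) a.
  by move=> k hk; apply: commrM; [apply: tc|apply: commrX; apply: tc].
have tcb : forall k, (1 <= k <= 3)%N -> GRing.comm (t k) b.
  by move=> k hk; apply: commrM; [apply: tc|apply: commrX; apply: tc].
have cab : GRing.comm a b.
  apply: commr_sym; apply: commrM; first by apply: commr_sym; apply: tcb.
  by apply: commrX; apply: commr_sym; apply: tcb.
have ad : a ^+ d = 1.
  rewrite exprMn_comm; last by apply: commrX; apply: tc.
  by rewrite exprAC !td // expr1n mulr1.
have bd : b ^+ d = 1.
  rewrite exprMn_comm; last by apply: commrX; apply: tc.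
  by rewrite exprAC !td // expr1n mulr1.
have E1 : e 1%N 2%N = Pw d a by apply: eij_P => //; [apply: tc|apply: td].
have E2 : e 2%N 3%N = Pw d b by apply: eij_P => //; [apply: tc|apply: td].
have E13 : e 1%N 3%N = Pw d (a * b).
  rewrite /e (eij_P d0) //; [|apply: tc|apply: td] => //.
  congr (Pw d _); rewrite /a /b mulrA -[t 1%N * _ * _]mulrA -exprSr prednK //.
  by rewrite td // mulr1.
pose x := e 1%N 2%N * e 2%N 3%N.
have X1 : e 1%N 3%N * e 1%N 2%N = x.
  have h : GRing.comm (a * b) a by apply: commr_sym; apply: commrM => //; apply: commr_refl.
  by rewrite /x E1 E2 E13 (@P_comm _ _ d (a * b) a h) P_mix.
have X2 : e 1%N 3%N * e 2%N 3%N = x.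
  have h : GRing.comm (b * a) b by apply: commr_sym; apply: commrM => //; apply: commr_refl.
  by rewrite /x E1 E2 E13 cab (@P_comm _ _ d (b * a) b h) P_mix // P_comm.
have X3 : e 2%N 3%N * e 1%N 2%N = x by rewrite /x E1 E2 P_comm.
have X4 : e 2%N 3%N * e 1%N 3%N = x.
  by rewrite /x E1 E2 E13 cab P_mix // P_comm.
have X5 : e 2%N 3%N * x = x.
  by rewrite /x mulrA X3 -/x /x -mulrA E2 P_idem.
pose T := \sum_(i < d) \sum_(j < d) \sum_(k < d) (t 1%N ^+ i * t 2%N ^+ j * t 3%N ^+ k).
have cE : c = T * g12 g.
  rewrite /c /c12 /T mulr_suml; apply: eq_bigr => i _.
  rewrite mulr_suml; apply: eq_bigr => j _; by rewrite mulr_suml.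
have Tg : forall y, T * y =
    \sum_(i < d) \sum_(j < d) \sum_(k < d) (t 1%N ^+ i * t 2%N ^+ j * t 3%N ^+ k * y).
  move=> y; rewrite /T mulr_suml; apply: eq_bigr => i _.
  rewrite mulr_suml; apply: eq_bigr => j _; by rewrite mulr_suml.
have gT1 : g 1%N * T = T * g 1%N.
  have -> : g 1%N * T = \sum_(i < d) \sum_(j < d) \sum_(k < d)
      (t 2%N ^+ i * t 1%N ^+ j * t 3%N ^+ k * g 1%N).
    rewrite /T mulr_sumr; apply: eq_bigr => i _.
    rewrite mulr_sumr; apply: eq_bigr => j _.
    rewrite mulr_sumr; apply: eq_bigr => k _.
    by apply: gM; [apply: gM|]; apply: gX.
  rewrite Tg exchange_big /=; apply: eq_bigr => i _; apply: eq_bigr => j _.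
  apply: eq_bigr => k _; congr (_ * _ * _).
  by apply: commrX; apply: commr_sym; apply: commrX; apply: tc.
have gT2 : g 2%N * T = T * g 2%N.
  have -> : g 2%N * T = \sum_(i < d) \sum_(j < d) \sum_(k < d)
      (t 1%N ^+ i * t 3%N ^+ j * t 2%N ^+ k * g 2%N).
    rewrite /T mulr_sumr; apply: eq_bigr => i _.
    rewrite mulr_sumr; apply: eq_bigr => j _.
    rewrite mulr_sumr; apply: eq_bigr => k _.
    by apply: gM; [apply: gM|]; apply: gX.
  rewrite Tg; apply: eq_bigr => i _; rewrite exchange_big /=; apply: eq_bigr => j _.
  apply: eq_bigr => k _; rewrite -!mulrA; congr (_ * _); rewrite !mulrA; congr (_ * _).
  by apply: commrX; apply: commr_sym; apply: commrX; apply: tc.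
have commT : forall y, GRing.comm (t 1%N) y -> GRing.comm (t 2%N) y ->
    GRing.comm (t 3%N) y -> GRing.comm T y.
  move=> y h1 h2 h3; apply: commr_sym; rewrite /T.
  apply: comm_sum => i _; apply: comm_sum => j _; apply: comm_sum => k _.
  by apply: commrM; [apply: commrM|]; apply: commrX; apply: commr_sym.
have Te1 : GRing.comm T (1 + (u - 1) *: e 1%N 2%N).
  apply: commrD; first exact: commr1.
  by apply: comm_scale; rewrite E1; apply: comm_P;
     apply: commT; apply: tca.
have Te2 : GRing.comm T (1 + (u - 1) *: e 2%N 3%N).
  apply: commrD; first exact: commr1.
  by apply: comm_scale; rewrite E2; apply: comm_P;
     apply: commT; apply: tcb.
have G1 : g12 g = (1 + g 1%N) * (1 + g 2%N + g 2%N * g 1%N).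
  rewrite /g12 mulrDl !mul1r !mulrDr !mulr1 !mulrA; exact: ac1.
have G2 : g12 g = (1 + g 2%N) * (1 + g 1%N + g 1%N * g 2%N).
  rewrite /g12 mulrDl !mul1r !mulrDr !mulr1 !mulrA braid; exact: ac2.
have P1 : g 1%N * c = (1 + (u - 1) *: e 1%N 2%N) * c.
  rewrite cE; apply: stepT => //.
  by rewrite G1 mulrA (sq_lemma sq1) mulrA.
have P2 : g 2%N * c = (1 + (u - 1) *: e 2%N 3%N) * c.
  rewrite cE; apply: stepT => //.
  by rewrite G2 mulrA (sq_lemma sq2) mulrA.
have g1e23 : g 1%N * e 2%N 3%N = e 1%N 3%N * g 1%N by apply: g_eij.
have g2e12 : g 2%N * e 1%N 2%N = e 1%N 3%N * g 2%N by apply: g_eij.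
have g1e13 : g 1%N * e 1%N 3%N = e 2%N 3%N * g 1%N by apply: g_eij.
have Ex : e 1%N 2%N * e 2%N 3%N = x by [].
clearbody x e.
have P3 : g 1%N * g 2%N * c =
        (1 + (u - 1) *: e 1%N 2%N + (u - 1) *: e 1%N 3%N
           + (u - 1) ^+ 2 *: (e 1%N 2%N * e 2%N 3%N)) * c.
  rewrite -mulrA P2 (push _ _ g1e23) P1 mulrA; congr (_ * _).
  rewrite mulrDl mul1r mulrDr mulr1 -scalerAl -scalerAr scalerA X1 -expr2.
  by rewrite !addrA Ex.
have P4 : g 2%N * g 1%N * c =
        (1 + (u - 1) *: e 2%N 3%N + (u - 1) *: e 1%N 3%N
           + (u - 1) ^+ 2 *: (e 1%N 2%N * e 2%N 3%N)) * c.
  rewrite -mulrA P1 (push _ _ g2e12) P2 mulrA; congr (_ * _).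
  rewrite mulrDl mul1r mulrDr mulr1 -scalerAl -scalerAr scalerA X2 -expr2.
  by rewrite !addrA Ex.
split => //.
rewrite -(mulrA (g 1%N * g 2%N)) -(mulrA (g 1%N)) P1 (push _ _ g2e12) (push _ _ g1e13) (mulrA (g 1%N)) P3 [LHS]mulrA. congr (_ * _).
rewrite Ex [LHS]mulrDl mul1r -scalerAl !(mulrDr (e 2%N 3%N)) mulr1.
rewrite -!(scalerAr _ (e 2%N 3%N)) X3 X4 X5 !scalerDr !scalerA.
apply: fin5.
ring.
Qed.
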